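(* Let $\alpha\subset\mathbb{Z}^2$ be a finite set of dimension $2$ with some of its sides marked. Then $\alpha$ is a marked B-polygon if and only if, after an affine unimodular transformation of $\mathbb{Z}^2$ (carrying marked sides to marked sides), one of the following holds: (1) ($B_1$-marked polygon) there is a marked side $G$ of $\alpha$ such that exactly one point of $\alpha$ lies outside the line $\operatorname{aff}(G)$, and it has lattice distance $1$ from that line; (2) ($B_2$-marked polygon) $\alpha\subset\{x_1\in\{0,1\}\}$, and both $\alpha\cap\{x_1=0\}$ and $\alpha\cap\{x_1=1\}$ are marked sides of $\alpha$; (3) (flat border marked polygon) $\alpha=\{(0,0),(a,0),(0,1),(1,1)\}$ for some integer $a>1$, and the three sides $[(0,0),(a,0)]$, $[(a,0),(1,1)]$, $[(0,1),(0,0)]$ are marked.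
   Context: A side of a finite set $\alpha\subset\mathbb{Z}^2$ of dimension $2$ is a set $\alpha\cap G$ for an edge $G$ of the convex hull of $\alpha$. $\alpha$ with a chosen set of marked sides is a marked B-polygon if for every triangle $S$ (three affinely independent points) with vertices in $\alpha$ there is a marked side $G$ of $\alpha$ such that two vertices of $S$ lie in $G$ and the third vertex has lattice distance $1$ from the line $\operatorname{aff}(G)$ (lattice distance: absolute value of the primitive integral affine function vanishing on that line). *)

(* Defs.v *)
From HB Require Import structures.
From mathcomp Require Import all_boot all_order all_algebra.
From mathcomp Require Import finmap.
Set Implicit Arguments. Unset Strict Implicit. Unset Printing Implicit Defensive.
Import Order.TTheory GRing.Theory Num.Theory.
Local Open Scope ring_scope.
Local Open Scope fset_scope.

Definition pt := (int * int)%type.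

Definition affz (a b c : int) (p : pt) : int := a * p.1 + b * p.2 + c.

Definition det3 (p q r : pt) : int :=
  (q.1 - p.1) * (r.2 - p.2) - (q.2 - p.2) * (r.1 - p.1).

Definition aff_indep (p q r : pt) : Prop := det3 p q r != 0.

Definition dim2 (alpha : {fset pt}) : Prop :=
  exists p q r, [/\ p \in alpha, q \in alpha, r \in alpha & aff_indep p q r].

(* G is a side of alpha: G = alpha ∩ E for an edge E of conv(alpha), i.e.
   G is the set of points of alpha on a supporting line of alpha,
   and it contains at least two points (so the face is an edge). *)
Definition is_side (alpha G : {fset pt}) : Prop :=
  exists a b c : int,
    [/\ (a != 0) || (b != 0),
        (forall p, p \in alpha -> 0 <= affz a b c p),
        G = [fset p in alpha | affz a b c p == 0] &
        (1 < #|` G|)%N].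

(* p has lattice distance k from the line aff(G) (G has >= 2 points, so the
   primitive integral affine function vanishing on aff(G) is unique up to sign) *)
Definition lattice_dist (G : {fset pt}) (p : pt) (k : int) : Prop :=
  exists a b c : int,
    [/\ gcdz a b = 1,
        (forall q, q \in G -> affz a b c q = 0) &
        `|affz a b c p| = k].

(* marked B-polygon: M is the set of marked sides *)
Definition marked_B_polygon (alpha : {fset pt}) (M : {fset {fset pt}}) : Prop :=
  forall p q r, p \in alpha -> q \in alpha -> r \in alpha -> aff_indep p q r ->
    exists2 G, G \in M &
      [\/ [/\ p \in G, q \in G & lattice_dist G r 1],
          [/\ p \in G, r \in G & lattice_dist G q 1] |
          [/\ q \in G, r \in G & lattice_dist G p 1]].

Definition aff_map (a b c d e f : int) (p : pt) : pt :=
  ((a * p.1 + b * p.2 + e)%R, (c * p.1 + d * p.2 + f)%R).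

Definition unimodular (a b c d : int) : Prop :=
  (a * d - b * c = 1) \/ (a * d - b * c = -1).

Definition img_set (T : pt -> pt) (A : {fset pt}) : {fset pt} :=
  [fset T x | x in A].

Definition img_marks (T : pt -> pt) (M : {fset {fset pt}}) : {fset {fset pt}} :=
  [fset img_set T G | G in M].

Definition B1_marked (alpha : {fset pt}) (M : {fset {fset pt}}) : Prop :=
  exists2 G, G \in M &
    exists p, alpha `\` G = [fset p] /\ lattice_dist G p 1.

Definition B2_marked (alpha : {fset pt}) (M : {fset {fset pt}}) : Prop :=
  [/\ (forall p, p \in alpha -> (p.1 == 0) || (p.1 == 1)),
      [fset p in alpha | p.1 == 0] \in M &
      [fset p in alpha | p.1 == 1] \in M].

Definition flat_border_marked (alpha : {fset pt}) (M : {fset {fset pt}}) : Prop :=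
  exists a : int,
    [/\ 1 < a,
        alpha = [fset (0, 0); (a, 0); (0, 1); (1, 1)],
        [fset (0, 0); (a, 0)] \in M,
        [fset (a, 0); (1, 1)] \in M &
        [fset (0, 1); (0, 0)] \in M].

(* Main.v *)
Require Import Defs.
From HB Require Import structures.
From mathcomp Require Import all_boot all_order all_algebra.
From mathcomp Require Import finmap.
From mathcomp Require Import zify ring lra.
From Stdlib Require Import Classical.
Import Order.TTheory GRing.Theory Num.Theory.
Local Open Scope ring_scope.
Local Open Scope fset_scope.
Local Open Scope ring_scope.

Lemma img_setP (T : pt -> pt) (A : {fset pt}) y :
  reflect (exists2 x, x \in A & y = T x) (y \in img_set T A).
Proof. rewrite /img_set /img_marks; apply: (iffP (imfsetP _ _ _ _)); by move=> [x Hx ->]; exists x. Qed.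

Lemma img_set_in (T : pt -> pt) (A : {fset pt}) x : x \in A -> T x \in img_set T A.
Proof. by move=> H; apply/img_setP; exists x. Qed.

Lemma img_marksP (T : pt -> pt) (M : {fset {fset pt}}) H :
  reflect (exists2 G, G \in M & H = img_set T G) (H \in img_marks T M).
Proof. rewrite /img_set /img_marks; apply: (iffP (imfsetP _ _ _ _)); by move=> [x Hx ->]; exists x. Qed.

Lemma img_marks_in (T : pt -> pt) (M : {fset {fset pt}}) G :
  G \in M -> img_set T G \in img_marks T M.
Proof. by move=> H; apply/img_marksP; exists G. Qed.

Lemma mem_img_set (T : pt -> pt) (A : {fset pt}) x :
  injective T -> (T x \in img_set T A) = (x \in A).
Proof.
move=> inj; apply/img_setP/idP => [[y Hy /inj ->] //|Hx]; by exists x.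
Qed.

Lemma img_set_comp (T1 T2 : pt -> pt) A :
  img_set T2 (img_set T1 A) = img_set (fun x => T2 (T1 x)) A.
Proof.
apply/fsetP => y; apply/img_setP/img_setP.
- by move=> [z /img_setP [x Hx ->] ->]; exists x.
- by move=> [x Hx ->]; exists (T1 x) => //; apply: img_set_in.
Qed.

Lemma img_set_ext (T1 T2 : pt -> pt) A :
  (forall x, T1 x = T2 x) -> img_set T1 A = img_set T2 A.
Proof.
move=> E; apply/fsetP => y; apply/img_setP/img_setP => [[x Hx ->]|[x Hx ->]];
 by exists x; rewrite ?E.
Qed.

Lemma img_marks_comp (T1 T2 : pt -> pt) M :
  img_marks T2 (img_marks T1 M) = img_marks (fun x => T2 (T1 x)) M.
Proof.
apply/fsetP => H; apply/img_marksP/img_marksP.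
- move=> [z /img_marksP [G HG ->] ->]; exists G => //; exact: img_set_comp.
- move=> [G HG ->]; exists (img_set T1 G); first exact: img_marks_in.
  by rewrite img_set_comp.
Qed.

Lemma img_set_id T A : (forall x, T x = x) -> img_set T A = A.
Proof.
move=> E; apply/fsetP => y; apply/img_setP/idP => [[x Hx ->]|Hy]; first by rewrite E.
by exists y; rewrite ?E.
Qed.

Lemma img_marks_id T M : (forall x, T x = x) -> img_marks T M = M.
Proof.
move=> E; apply/fsetP => H; apply/img_marksP/idP => [[G HG ->]|HH].
  by rewrite img_set_id.
by exists H; rewrite ?img_set_id.
Qed.

Lemma aff_inv a b c d e f : unimodular a b c d ->
  exists a' b' c' d' e' f', unimodular a' b' c' d' /\
    forall x, aff_map a' b' c' d' e' f' (aff_map a b c d e f x) = x.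
Proof.
case=> H.
- exists d, (-b), (-c), a, (b*f-d*e), (c*e-a*f); split.
    by left; rewrite -H; ring.
  case=> x1 x2; rewrite /aff_map /=; congr pair.
    by transitivity ((a*d-b*c)*x1); [ring | rewrite H mul1r].
  by transitivity ((a*d-b*c)*x2); [ring | rewrite H mul1r].
- exists (-d), b, c, (-a), (d*e-b*f), (a*f-c*e); split.
    by right; rewrite -H; ring.
  case=> x1 x2; rewrite /aff_map /=; congr pair.
    by transitivity (-(a*d-b*c)*x1); [ring | rewrite H opprK mul1r].
  by transitivity (-(a*d-b*c)*x2); [ring | rewrite H opprK mul1r].
Qed.

Lemma aff_inj a b c d e f : unimodular a b c d -> injective (aff_map a b c d e f).
Proof.
move=> /(@aff_inv a b c d e f) [a' [b' [c' [d' [e' [f' [_ K]]]]]]].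
exact: (can_inj K).
Qed.

Lemma aff_comp a1 b1 c1 d1 e1 f1 a2 b2 c2 d2 e2 f2 x :
  aff_map a2 b2 c2 d2 e2 f2 (aff_map a1 b1 c1 d1 e1 f1 x) =
  aff_map (a2*a1+b2*c1) (a2*b1+b2*d1) (c2*a1+d2*c1) (c2*b1+d2*d1)
          (a2*e1+b2*f1+e2) (c2*e1+d2*f1+f2) x.
Proof. case: x => x1 x2; rewrite /aff_map /=; congr pair; ring. Qed.

Lemma unimod_comp a1 b1 c1 d1 a2 b2 c2 d2 :
  unimodular a1 b1 c1 d1 -> unimodular a2 b2 c2 d2 ->
  unimodular (a2*a1+b2*c1) (a2*b1+b2*d1) (c2*a1+d2*c1) (c2*b1+d2*d1).
Proof.
have E : (a2*a1+b2*c1)*(c2*b1+d2*d1) - (a2*b1+b2*d1)*(c2*a1+d2*c1)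
   = (a2*d2-b2*c2)*(a1*d1-b1*c1) by ring.
rewrite /unimodular E; case=> ->; case=> ->; rewrite ?mulr1 ?mulN1r ?opprK;
 by [left|right].
Qed.

Lemma det3_aff a b c d e f p q r :
  det3 (aff_map a b c d e f p) (aff_map a b c d e f q) (aff_map a b c d e f r)
  = (a*d-b*c) * det3 p q r.
Proof. rewrite /det3 /aff_map /=; ring. Qed.

Lemma gcd_unimod a b c d a' b' : unimodular a b c d -> gcdz a' b' = 1 ->
  gcdz (a'*a + b'*c) (a'*b + b'*d) = 1.
Proof.
move=> U G1.
set g := gcdz _ _.
have h1 : (g %| (a'*a + b'*c)%R)%Z by apply: dvdz_gcdl.
have h2 : (g %| (a'*b + b'*d)%R)%Z by apply: dvdz_gcdr.
have ea : a' * (a*d-b*c) = d*(a'*a + b'*c) - c*(a'*b + b'*d) by ring.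
have eb : b' * (a*d-b*c) = a*(a'*b + b'*d) - b*(a'*a + b'*c) by ring.
have ha : (g %| (a' * (a*d-b*c))%R)%Z by rewrite ea rpredB // dvdz_mull.
have hb : (g %| (b' * (a*d-b*c))%R)%Z by rewrite eb rpredB // dvdz_mull.
have ha' : (g %| a')%Z by case: U ha => ->; rewrite ?mulr1 ?mulrN1 ?rpredN.
have hb' : (g %| b')%Z by case: U hb => ->; rewrite ?mulr1 ?mulrN1 ?rpredN.
have : (g %| gcdz a' b')%Z by rewrite dvdz_gcd ha' hb'.
rewrite G1 dvdz1 /g /gcdz => /eqP.
by case: (gcdn _ _) => // n /= ->.
Qed.

Lemma card_img T A : injective T -> #|` img_set T A| = #|` A|.
Proof. move=> inj; apply/eqP; rewrite /img_set; apply/card_in_imfsetP => x y _ _; exact: inj. Qed.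

Lemma affz_aff a b c d e f a' b' c' x :
  affz a' b' c' (aff_map a b c d e f x) =
  affz (a'*a + b'*c) (a'*b + b'*d) (a'*e + b'*f + c') x.
Proof. rewrite /affz /aff_map /=; ring. Qed.

Lemma ld_back a b c d e f G r k : unimodular a b c d ->
  lattice_dist (img_set (aff_map a b c d e f) G) (aff_map a b c d e f r) k ->
  lattice_dist G r k.
Proof.
move=> U [a' [b' [c' [g1 van ab]]]].
exists (a'*a + b'*c), (a'*b + b'*d), (a'*e + b'*f + c'); split.
- exact: gcd_unimod.
- by move=> q Hq; rewrite -affz_aff; apply: van; apply: img_set_in.
- by rewrite -affz_aff.
Qed.

Lemma side_back a b c d e f A G : unimodular a b c d ->
  is_side (img_set (aff_map a b c d e f) A) (img_set (aff_map a b c d e f) G) ->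
  is_side A G.
Proof.
move=> U [a' [b' [c' [nz nn eqG card]]]].
have inj := @aff_inj a b c d e f U.
exists (a'*a + b'*c), (a'*b + b'*d), (a'*e + b'*f + c'); split.
- have ea : a' * (a*d-b*c) = d*(a'*a + b'*c) - c*(a'*b + b'*d) by ring.
  have eb : b' * (a*d-b*c) = a*(a'*b + b'*d) - b*(a'*a + b'*c) by ring.
  case: (boolP ((a'*a + b'*c) == 0)) => //= /eqP h1.
  apply/eqP => h2; move: nz.
  rewrite h1 h2 !mulr0 subr0 in ea eb.
  by case: U ea eb; move=> -> ; rewrite ?mulr1 ?mulrN1 => /eqP; rewrite ?oppr_eq0 => /eqP -> /eqP; rewrite ?oppr_eq0 => /eqP ->.
- by move=> p Hp; rewrite -affz_aff; apply: nn; apply: img_set_in.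
- apply/fsetP => x; rewrite -(mem_img_set _ _ _ inj) eqG !inE mem_img_set //.
  by rewrite affz_aff.
- by rewrite -(card_img _ G inj).
Qed.

Lemma B_back a b c d e f alpha M : unimodular a b c d ->
  marked_B_polygon (img_set (aff_map a b c d e f) alpha) (img_marks (aff_map a b c d e f) M) ->
  marked_B_polygon alpha M.
Proof.
move=> U HB p q r Hp Hq Hr Hi.
set T := aff_map a b c d e f.
have inj := @aff_inj a b c d e f U.
have Hi' : aff_indep (T p) (T q) (T r).
  rewrite /aff_indep det3_aff mulf_eq0 negb_or Hi andbT.
  by case: U => ->.
have [G' /img_marksP [G HG ->] HH] := HB _ _ _ (img_set_in T _ _ Hp) (img_set_in T _ _ Hq) (img_set_in T _ _ Hr) Hi'.
exists G => //.
rewrite !mem_img_set // in HH.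
case: HH => [[h1 h2 h3]|[h1 h2 h3]|[h1 h2 h3]].
- by apply: Or31; split => //; apply: ld_back h3.
- by apply: Or32; split => //; apply: ld_back h3.
- by apply: Or33; split => //; apply: ld_back h3.
Qed.

Lemma seq_min (T : eqType) (phi : T -> int) (s : seq T) x0 : x0 \in s ->
  exists2 x, x \in s & forall y, y \in s -> phi x <= phi y.
Proof.
elim: s x0 => [//|a s IH] x0 _.
case: s IH => [|b s] IH.
  by exists a; rewrite ?inE // => y; rewrite inE => /eqP ->.
have [x Hx Hm] := IH b (mem_head _ _).
case: (lerP (phi a) (phi x)) => h.
- exists a; first exact: mem_head.
  move=> y; rewrite inE => /orP [/eqP ->//|/Hm]; exact: le_trans.
- exists x; first by rewrite inE Hx orbT.
  move=> y; rewrite inE => /orP [/eqP ->|/Hm //]; exact: ltW.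
Qed.

Lemma fset_min (S : {fset pt}) (phi : pt -> int) x0 : x0 \in S ->
  exists2 x, x \in S & forall y, y \in S -> phi x <= phi y.
Proof. exact: seq_min. Qed.

Lemma pt_eq (y z : pt) : y.1 = z.1 -> y.2 = z.2 -> y = z.
Proof. by case: y; case: z => ? ? ? ? /= -> ->. Qed.

Lemma side_line1 alpha H t1 t2 : is_side alpha H -> t1 \in H -> t2 \in H ->
  t1.1 = 1 -> t2.1 = 1 -> t1.2 != t2.2 -> H = [fset y in alpha | y.1 == 1].
Proof.
move=> [a [b [c [nz nn eqH card]]]].
rewrite eqH !inE /affz => /andP [_ /eqP h1] /andP [_ /eqP h2] e1 e2 ne.
rewrite e1 e2 in h1 h2.
have hb : b * (t1.2 - t2.2) = 0 by rewrite mulrBr; lra.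
move/eqP: hb; rewrite mulf_eq0 subr_eq0 (negbTE ne) orbF => /eqP hb.
rewrite hb eqxx orbF in nz; rewrite hb in h1.
have hc : c = - a by lra.
apply/fsetP => y; rewrite !inE /affz hb hc.
have -> : a * y.1 + 0 * y.2 + - a = a * (y.1 - 1) by ring.
by rewrite mulf_eq0 (negbTE nz) subr_eq0.
Qed.

Definition lvl (alpha : {fset pt}) := forall y, y \in alpha -> y.1 = 0 \/ y.1 = 1.

Lemma side_mixed alpha H b t : lvl alpha -> is_side alpha H -> b \in H -> t \in H ->
  b.1 = 0 -> t.1 = 1 ->
  (forall y, y \in H -> y = b \/ y = t) /\
  ((forall y, y \in alpha -> (y.1 = 0 -> b.2 <= y.2) /\ (y.1 = 1 -> t.2 <= y.2)) \/
   (forall y, y \in alpha -> (y.1 = 0 -> y.2 <= b.2) /\ (y.1 = 1 -> y.2 <= t.2))).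
Proof.
move=> L [a [bb [c [nz nn eqH card]]]].
rewrite eqH !inE /affz => /andP [_ /eqP h1] /andP [_ /eqP h2] e1 e2.
rewrite e1 e2 in h1 h2.
have bnz : bb != 0.
  apply/eqP => hb; rewrite hb in nz h1 h2.
  have ha : a = 0 by lra.
  by move: nz; rewrite ha eqxx.
have E : forall y, y \in alpha ->
   (y.1 = 0 -> a * y.1 + bb * y.2 + c = bb * (y.2 - b.2)) /\
   (y.1 = 1 -> a * y.1 + bb * y.2 + c = bb * (y.2 - t.2)).
  move=> y _; split => ->.
    have -> : c = - (bb * b.2) by lra.
    ring.
  have -> : c = - (a + bb * t.2) by lra.
  ring.
split.
- move=> y; rewrite inE => /andP [Hy /eqP hy].
  have [E0 E1] := E y Hy.
  case: (L y Hy) => hl.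
  + left; apply: pt_eq; first by rewrite hl e1.
    move: hy; rewrite (E0 hl) => /eqP; rewrite mulf_eq0 (negbTE bnz) subr_eq0 => /eqP //.
  + right; apply: pt_eq; first by rewrite hl e2.
    move: hy; rewrite (E1 hl) => /eqP; rewrite mulf_eq0 (negbTE bnz) subr_eq0 => /eqP //.
- case: (ltrgtP bb 0) => hb; last by move: bnz; rewrite hb eqxx.
  + right => y Hy; have [E0 E1] := E y Hy; have h := nn y Hy; rewrite /affz in h.
    split => hl.
      by rewrite (E0 hl) in h; nra.
    by rewrite (E1 hl) in h; nra.
  + left => y Hy; have [E0 E1] := E y Hy; have h := nn y Hy; rewrite /affz in h.
    split => hl.
      by rewrite (E0 hl) in h; nra.
    by rewrite (E1 hl) in h; nra.
Qed.

Lemma ld_mixed H b t t' : b \in H -> t \in H -> b.1 = 0 -> t.1 = 1 -> t'.1 = 1 ->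
  lattice_dist H t' 1 -> `|t'.2 - t.2| = 1.
Proof.
move=> Hb Ht e1 e2 e3 [a [bb [c [g van ab]]]].
have h1 := van _ Hb; have h2 := van _ Ht.
move: h1 h2 ab; rewrite /affz e1 e2 e3 => h1 h2 ab.
have ea : a = bb * (b.2 - t.2) by lra.
have : (bb %| gcdz a bb)%Z by rewrite dvdz_gcd ea dvdz_mulr ?dvdzz.
rewrite g dvdz1 => /eqP hb.
have hb' : `|bb| = 1 by lia.
have e : a * 1 + bb * t'.2 + c = bb * (t'.2 - t.2) by rewrite ea; lra.
by move: ab; rewrite e normrM hb' mul1r.
Qed.

Lemma indep_011 p q r : p.1 = 0 -> q.1 = 1 -> r.1 = 1 -> q.2 != r.2 -> aff_indep p q r.
Proof.
move=> e1 e2 e3 ne; rewrite /aff_indep /det3 e1 e2 e3.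
have -> : (1 - 0) * (r.2 - p.2) - (q.2 - p.2) * (1 - 0) = r.2 - q.2 by ring.
by rewrite subr_eq0 eq_sym.
Qed.

Definition concl (alpha : {fset pt}) (M : {fset {fset pt}}) : Prop :=
  exists (a b c d e f : int), unimodular a b c d /\
    let T := aff_map a b c d e f in
    [\/ B1_marked (img_set T alpha) (img_marks T M),
        B2_marked (img_set T alpha) (img_marks T M) |
        flat_border_marked (img_set T alpha) (img_marks T M)].

Lemma img_set1 T u : img_set T [fset u] = [fset T u].
Proof.
apply/fsetP => y; apply/img_setP/idP => [[x]|/fset1P ->]; last by exists u; rewrite ?inE.
by rewrite inE => /eqP -> ->; rewrite inE.
Qed.

Lemma img_setU T A B : img_set T (A `|` B) = img_set T A `|` img_set T B.
Proof.
apply/fsetP => y; rewrite inE; apply/img_setP/orP.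
- move=> [x]; rewrite inE => /orP [] Hx ->; [left|right]; exact: img_set_in.
- by case=> /img_setP [x Hx ->]; exists x; rewrite // inE Hx ?orbT.
Qed.

Lemma aff_id x : aff_map 1 0 0 1 0 0 x = x.
Proof. case: x => x1 x2; rewrite /aff_map /=; congr pair; ring. Qed.

Lemma tri_use alpha M p q r : marked_B_polygon alpha M ->
  (forall G, G \in M -> is_side alpha G) ->
  [fset y in alpha | y.1 == 1] \notin M ->
  p \in alpha -> q \in alpha -> r \in alpha -> p.1 = 0 -> q.1 = 1 -> r.1 = 1 -> q.2 != r.2 ->
  exists2 G, G \in M &
   ([/\ p \in G, q \in G & lattice_dist G r 1] \/ [/\ p \in G, r \in G & lattice_dist G q 1]).
Proof.
move=> HB HS nT Hp Hq Hr e1 e2 e3 ne.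
have [G HG HH] := HB p q r Hp Hq Hr (@indep_011 p q r e1 e2 e3 ne).
exists G => //; case: HH => [h|h|[h1 h2 _]]; [by left|by right|].
have E := @side_line1 alpha G q r (HS G HG) h1 h2 e2 e3 ne.
by move: nT; rewrite -E HG.
Qed.

Lemma fset2_eq (G : {fset pt}) u v : u \in G -> v \in G ->
  (forall y, y \in G -> y = u \/ y = v) -> G = [fset u; v].
Proof.
move=> hu hv H; apply/fsetP => y; rewrite !inE; apply/idP/idP.
- by move=> /H [->|->]; rewrite eqxx ?orbT.
- by case/orP => /eqP ->.
Qed.

Lemma ar_between (a b x y : int) : a <= x -> x <= b -> a <= y -> y <= b -> x != y -> a < b.
Proof. move=> *; lia. Qed.
Lemma ar_eq (x y : int) : x <= y -> y <= x -> x = y.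
Proof. move=> *; lia. Qed.
Lemma ar_lt (x y : int) : x <= y -> x != y -> x < y.
Proof. move=> *; lia. Qed.
Lemma ar_contra (x y : int) : x < y -> y <= x -> False.
Proof. move=> *; lia. Qed.
Lemma ar_ne (x y : int) : x < y -> x != y.
Proof. move=> *; lia. Qed.
Lemma ar_one (x y : int) : `|y - x| = 1 -> x < y -> y = x + 1.
Proof. move=> *; lia. Qed.
Lemma ar_k (x y : int) : x < y -> y - x <> 1 -> 1 < y - x.
Proof. move=> *; lia. Qed.
Arguments ar_between {a b x y}. Arguments ar_eq {x y}. Arguments ar_lt {x y}.
Arguments ar_contra {x y}. Arguments ar_ne {x y}. Arguments ar_one {x y}. Arguments ar_k {x y}.
Lemma B2a p : p \in [fset ((0:int), (0:int)); (1, 0); (0, 1); (1, 1)] -> (p.1 == 0) || (p.1 == 1).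
Proof. case: p => x y; rewrite !inE !xpair_eqE /=; lia. Qed.
Lemma B2b : [fset p in [fset ((0:int), (0:int)); (1, 0); (0, 1); (1, 1)] | p.1 == 0] = [fset (0,0); (0,1)].
Proof. apply/fsetP => -[x y]; rewrite !inE !xpair_eqE /=; lia. Qed.
Lemma B2c : [fset p in [fset ((0:int), (0:int)); (1, 0); (0, 1); (1, 1)] | p.1 == 1] = [fset (1,0); (1,1)].
Proof. apply/fsetP => -[x y]; rewrite !inE !xpair_eqE /=; lia. Qed.

Lemma normalized alpha M :
  lvl alpha ->
  [fset y in alpha | y.1 == 0] \in M ->
  forall b1 b2 t0, b1 \in alpha -> b2 \in alpha -> b1.1 = 0 -> b2.1 = 0 -> b1 != b2 ->
  t0 \in alpha -> t0.1 = 1 ->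
  marked_B_polygon alpha M -> (forall G, G \in M -> is_side alpha G) ->
  concl alpha M.
Proof.
move=> L HB0 b1 b2 t0 Hb1 Hb2 eb1 eb2 nb Ht0 et0 HB HS.
case: (classic (forall y, y \in alpha -> y.1 = 1 -> y = t0)) => [all1|].
  exists 1, 0, 0, 1, 0, 0; split; first by left; ring.
  move=> T; rewrite /T (img_set_id _ _ aff_id) (img_marks_id _ _ aff_id).
  apply: Or31; exists [fset y in alpha | y.1 == 0] => //; exists t0; split.
    apply/fsetP => y; rewrite !inE; apply/idP/idP.
      move=> /andP [h1 h2]; move: h1; rewrite h2 /=.
      case: (L y h2) => e; rewrite e //= => _; by rewrite (all1 y h2 e).
    by move=> /eqP ->; rewrite Ht0 et0.
  exists 1, 0, 0; split => //.
    by move=> q; rewrite inE => /andP [_ /eqP e]; rewrite /affz e; ring.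
  by rewrite /affz et0; rewrite mul1r mul0r !addr0.
move/not_all_ex_not => [t H0]; have [Ht H1] := imply_to_and _ _ H0; have [et nt] := imply_to_and _ _ H1.
case: (boolP ([fset y in alpha | y.1 == 1] \in M)) => HT.
  exists 1, 0, 0, 1, 0, 0; split; first by left; ring.
  move=> T; rewrite /T (img_set_id _ _ aff_id) (img_marks_id _ _ aff_id).
  apply: Or32; split => //.
  by move=> p Hp; case: (L p Hp) => ->; rewrite eqxx ?orbT.
have inB : forall y, y \in alpha -> y.1 = 0 -> y \in [fset y in alpha | y.1 == 0].
  by move=> y h e; rewrite !inE h e eqxx.
have inT : forall y, y \in alpha -> y.1 = 1 -> y \in [fset y in alpha | y.1 == 1].
  by move=> y h e; rewrite !inE h e eqxx.
have [bmin Hbmin Mbmin] := fset_min _ (fun y : pt => y.2) _ (inB _ Hb1 eb1).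
have [bmax Hbmax Mbmax] := fset_min _ (fun y : pt => - y.2) _ (inB _ Hb1 eb1).
have [tmin Htmin Mtmin] := fset_min _ (fun y : pt => y.2) _ (inT _ Ht0 et0).
have [tmax Htmax Mtmax] := fset_min _ (fun y : pt => - y.2) _ (inT _ Ht0 et0).
move: Hbmin Hbmax Htmin Htmax; rewrite !inE.
move=> /andP [Abmin /eqP ebmin] /andP [Abmax /eqP ebmax] /andP [Atmin /eqP etmin] /andP [Atmax /eqP etmax].
have minB : forall y, y \in alpha -> y.1 = 0 -> bmin.2 <= y.2.
  by move=> y h e; apply: (Mbmin y (inB _ h e)).
have maxB : forall y, y \in alpha -> y.1 = 0 -> y.2 <= bmax.2.
  by move=> y h e; have := Mbmax y (inB _ h e); rewrite lerN2.
have minT : forall y, y \in alpha -> y.1 = 1 -> tmin.2 <= y.2.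
  by move=> y h e; apply: (Mtmin y (inT _ h e)).
have maxT : forall y, y \in alpha -> y.1 = 1 -> y.2 <= tmax.2.
  by move=> y h e; have := Mtmax y (inT _ h e); rewrite lerN2.
have hB : bmin.2 < bmax.2.
  have := minB _ Hb1 eb1; have := maxB _ Hb1 eb1.
  have := minB _ Hb2 eb2; have := maxB _ Hb2 eb2.
  have : b1.2 != b2.2.
    apply/eqP => e; move/eqP: nb => nb; apply: nb; apply: pt_eq => //; by rewrite eb1 eb2.
  move=> h1 h2 h3 h4 h5; exact: (ar_between h5 h4 h3 h2 h1).
have hT : tmin.2 < tmax.2.
  have := minT _ Ht et; have := maxT _ Ht et.
  have := minT _ Ht0 et0; have := maxT _ Ht0 et0.
  have : t.2 != t0.2.
    apply/eqP => e; apply: nt; apply: pt_eq => //; by rewrite et et0.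
  move=> h1 h2 h3 h4 h5; exact: (ar_between h5 h4 h3 h2 h1).
have TA : forall y, y \in alpha -> y.1 = 1 -> y = tmin \/ y = tmax.
  move=> y Hy ey; case: (y =P tmax) => [->|ny]; [by right|left].
  have ne : y.2 != tmax.2.
    by apply/eqP => e; apply: ny; apply: pt_eq => //; rewrite ey etmax.
  have lt : y.2 < tmax.2 by apply: ar_lt => //; apply: maxT.
  have [G HG [[h1 h2 _]|[h1 h2 _]]] :=
    @tri_use alpha M bmin y tmax HB HS HT Abmin Hy Atmax ebmin ey etmax ne.
  - case: (@side_mixed alpha G _ _ L (HS G HG) h1 h2 ebmin ey) => _ [m|m].
      by apply: pt_eq; [rewrite ey etmin | apply: ar_eq; [apply: (m tmin Atmin).2 | apply: minT]].
    by case: (ar_contra hB ((m bmax Abmax).1 ebmax)).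
  - case: (@side_mixed alpha G _ _ L (HS G HG) h1 h2 ebmin etmax) => _ [m|m].
      by case: (ar_contra lt ((m y Hy).2 ey)).
    by case: (ar_contra hB ((m bmax Abmax).1 ebmax)).
have TB : forall y, y \in alpha -> y.1 = 0 -> y = bmin \/ y = bmax.
  move=> y Hy ey.
  have ne : tmin.2 != tmax.2 by apply: ar_ne.
  have [G HG [[h1 h2 _]|[h1 h2 _]]] :=
    @tri_use alpha M y tmin tmax HB HS HT Hy Atmin Atmax ey etmin etmax ne.
  - case: (@side_mixed alpha G _ _ L (HS G HG) h1 h2 ey etmin) => _ [m|m].
      left; apply: pt_eq; [by rewrite ey ebmin | apply: ar_eq; [apply: (m bmin Abmin).1 | apply: minB]] => //.
    right; apply: pt_eq; [by rewrite ey ebmax | apply: ar_eq; [apply: maxB | apply: (m bmax Abmax).1]] => //.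
  - case: (@side_mixed alpha G _ _ L (HS G HG) h1 h2 ey etmax) => _ [m|m].
      left; apply: pt_eq; [by rewrite ey ebmin | apply: ar_eq; [apply: (m bmin Abmin).1 | apply: minB]] => //.
    right; apply: pt_eq; [by rewrite ey ebmax | apply: ar_eq; [apply: maxB | apply: (m bmax Abmax).1]] => //.
have ne : tmin.2 != tmax.2 by apply: ar_ne.
have [G1 HG1 [E1 D1]] : exists2 G, G \in M & G = [fset bmin; tmin] /\ `|tmax.2 - tmin.2| = 1.
  have [G HG [[h1 h2 hd]|[h1 h2 _]]] :=
    @tri_use alpha M bmin tmin tmax HB HS HT Abmin Atmin Atmax ebmin etmin etmax ne.
  - exists G => //; split; last exact: (@ld_mixed G bmin tmin tmax h1 h2 ebmin etmin etmax hd).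
    case: (@side_mixed alpha G _ _ L (HS G HG) h1 h2 ebmin etmin) => hG _.
    exact: fset2_eq.
  - case: (@side_mixed alpha G _ _ L (HS G HG) h1 h2 ebmin etmax) => _ [m|m].
      by case: (ar_contra hT ((m tmin Atmin).2 etmin)).
    by case: (ar_contra hB ((m bmax Abmax).1 ebmax)).
have [G2 HG2 E2] : exists2 G, G \in M & G = [fset bmax; tmax].
  have [G HG [[h1 h2 _]|[h1 h2 _]]] :=
    @tri_use alpha M bmax tmin tmax HB HS HT Abmax Atmin Atmax ebmax etmin etmax ne.
  - case: (@side_mixed alpha G _ _ L (HS G HG) h1 h2 ebmax etmin) => _ [m|m].
      by case: (ar_contra hB ((m bmin Abmin).1 ebmin)).
    by case: (ar_contra hT ((m tmax Atmax).2 etmax)).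
  - exists G => //.
    case: (@side_mixed alpha G _ _ L (HS G HG) h1 h2 ebmax etmax) => hG _.
    exact: fset2_eq.
have Ealpha : alpha = [fset bmin; bmax; tmin; tmax].
  apply/fsetP => y; rewrite !inE; apply/idP/idP.
    move=> Hy; case: (L y Hy) => e.
      by case: (TB y Hy e) => ->; rewrite eqxx ?orbT.
    by case: (TA y Hy e) => ->; rewrite eqxx ?orbT.
  by move=> /orP [/orP [/orP [] |] |] /eqP ->.
have EB : [fset y in alpha | y.1 == 0] = [fset bmin; bmax].
  apply: fset2_eq; [by rewrite !inE Abmin ebmin eqxx | by rewrite !inE Abmax ebmax eqxx |].
  by move=> y; rewrite !inE => /andP [Hy /eqP e]; apply: TB.
have tmaxE : tmax.2 = tmin.2 + 1 by apply: ar_one.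
pose T2 := aff_map (bmin.2 - tmin.2) 1 1 0 (- bmin.2) 0.
have U2 : unimodular (bmin.2 - tmin.2) 1 1 0 by right; ring.
have Tv : forall y, T2 y = ((bmin.2 - tmin.2) * y.1 + y.2 - bmin.2, y.1).
  by case=> y1 y2; rewrite /T2 /aff_map /=; congr pair; ring.
have T2bmin : T2 bmin = (0, 0) by rewrite Tv ebmin; congr pair; ring.
have T2bmax : T2 bmax = (bmax.2 - bmin.2, 0) by rewrite Tv ebmax; congr pair; ring.
have T2tmin : T2 tmin = (0, 1) by rewrite Tv etmin; congr pair; ring.
have T2tmax : T2 tmax = (1, 1) by rewrite Tv etmax tmaxE; congr pair; ring.
have Iimg : img_set T2 alpha = [fset (0,0); (bmax.2 - bmin.2, 0); (0, 1); (1, 1)].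
  by rewrite Ealpha !img_setU !img_set1 T2bmin T2bmax T2tmin T2tmax.
have IB : img_set T2 [fset y in alpha | y.1 == 0] = [fset (0,0); (bmax.2 - bmin.2, 0)].
  by rewrite EB !img_setU !img_set1 T2bmin T2bmax.
have IG1 : img_set T2 G1 = [fset (0,0); (0,1)].
  by rewrite E1 !img_setU !img_set1 T2bmin T2tmin.
have IG2 : img_set T2 G2 = [fset (bmax.2 - bmin.2, 0); (1,1)].
  by rewrite E2 !img_setU !img_set1 T2bmax T2tmax.
exists (bmin.2 - tmin.2), 1, 1, 0, (- bmin.2), 0; split => //.
move=> T; rewrite -/T2 /T.
case: (boolP (bmax.2 - bmin.2 == 1)) => /eqP hk; last first.
- apply: Or33; exists (bmax.2 - bmin.2); split => //; first exact: ar_k.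
  + by rewrite -IB; apply: img_marks_in.
  + by rewrite -IG2; apply: img_marks_in.
  + have -> : [fset ((0:int), (1:int)); (0, 0)] = [fset (0,0); (0,1)] by rewrite fsetUC.
    by rewrite -IG1; apply: img_marks_in.
- apply: Or32; split.
  + by move=> p; rewrite Iimg hk; apply: B2a.
  + have -> : [fset p in img_set T2 alpha | p.1 == 0] = img_set T2 G1.
      by rewrite IG1 Iimg hk B2b.
    exact: img_marks_in.
  + have -> : [fset p in img_set T2 alpha | p.1 == 1] = img_set T2 G2.
      by rewrite IG2 Iimg hk B2c.
    exact: img_marks_in.
Qed.

Lemma det_line (a b c : int) (s u v : pt) : affz a b c u = 0 -> affz a b c v = 0 ->
  a * det3 s u v = -(v.2 - u.2) * affz a b c s /\
  b * det3 s u v = (v.1 - u.1) * affz a b c s.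
Proof.
rewrite /affz /det3 => hu hv.
have hc : c = -(a * u.1 + b * u.2) by lra.
rewrite hc in hv *.
have hd : a * (v.1 - u.1) + b * (v.2 - u.2) = 0 by lra.
split.
- transitivity (-(v.2 - u.2) * (a * s.1 + b * s.2 + - (a * u.1 + b * u.2))
     - (u.2 - s.2) * (a * (v.1 - u.1) + b * (v.2 - u.2))); first ring.
  by rewrite hd mulr0 subr0.
- transitivity ((v.1 - u.1) * (a * s.1 + b * s.2 + - (a * u.1 + b * u.2))
     + (u.1 - s.1) * (a * (v.1 - u.1) + b * (v.2 - u.2))); first ring.
  by rewrite hd mulr0 addr0.
Qed.

Lemma gcd1_nz a b : gcdz a b = 1 -> (a != 0) || (b != 0).
Proof. by case: (a =P 0) => [->|//]; case: (b =P 0) => [->|//]. Qed.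

Lemma collinear (a b c : int) (p q r : pt) : (a != 0) || (b != 0) ->
  affz a b c p = 0 -> affz a b c q = 0 -> affz a b c r = 0 -> det3 p q r = 0.
Proof.
move=> nz hp hq hr; have [h1 h2] := @det_line a b c p q r hq hr.
rewrite hp in h1 h2.
case/orP: nz => nz.
  by apply: (mulfI nz); rewrite h1 !mulr0.
by apply: (mulfI nz); rewrite h2 !mulr0.
Qed.

Lemma det3_pp p r : det3 p p r = 0. Proof. rewrite /det3; ring. Qed.
Lemma det3_pq p q : det3 p q p = 0. Proof. rewrite /det3; ring. Qed.
Lemma det3_qq p q : det3 p q q = 0. Proof. rewrite /det3; ring. Qed.

Lemma B1_B alpha M : B1_marked alpha M -> marked_B_polygon alpha M.
Proof.
move=> [G HG [s [ED [a [b [c [g van ab]]]]]]] p q r Hp Hq Hr Hi.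
exists G => //.
have nz := @gcd1_nz a b g.
have out : forall x, x \in alpha -> x \notin G -> x = s.
  move=> x hx hn; have : x \in alpha `\` G by rewrite inE hn hx.
  by rewrite ED inE => /eqP.
have ld : lattice_dist G s 1 by exists a, b, c.
move: Hi; rewrite /aff_indep.
case: (boolP (p \in G)) => hp; case: (boolP (q \in G)) => hq; case: (boolP (r \in G)) => hr.
- by rewrite (@collinear a b c p q r nz (van _ hp) (van _ hq) (van _ hr)) eqxx.
- by move=> _; apply: Or31; rewrite (out r Hr hr).
- by move=> _; apply: Or32; rewrite (out q Hq hq).
- by rewrite (out q Hq hq) (out r Hr hr) det3_qq eqxx.
- by move=> _; apply: Or33; rewrite (out p Hp hp).
- by rewrite (out p Hp hp) (out r Hr hr) det3_pq eqxx.
- by rewrite (out p Hp hp) (out q Hq hq) det3_pp eqxx.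
- by rewrite (out p Hp hp) (out q Hq hq) det3_pp eqxx.
Qed.

Lemma ld0 (G : {fset pt}) x : (forall y, y \in G -> y.1 = 0) -> x.1 = 1 -> lattice_dist G x 1.
Proof.
move=> h e; exists 1, 0, 0; split => //.
  by move=> y /h; rewrite /affz => ->; ring.
by rewrite /affz e; rewrite mul1r mul0r !addr0.
Qed.

Lemma ld1 (G : {fset pt}) x : (forall y, y \in G -> y.1 = 1) -> x.1 = 0 -> lattice_dist G x 1.
Proof.
move=> h e; exists 1, 0, (-1); split => //.
  by move=> y /h; rewrite /affz => ->; ring.
by rewrite /affz e; rewrite mul1r mul0r !addr0 sub0r normrN.
Qed.

Lemma det3_lvl p q r : p.1 = q.1 -> q.1 = r.1 -> det3 p q r = 0.
Proof. by rewrite /det3 => -> ->; ring. Qed.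

Lemma B2_B alpha M : B2_marked alpha M -> marked_B_polygon alpha M.
Proof.
move=> [L H0 H1] p q r Hp Hq Hr.
set G0 := [fset p in alpha | p.1 == 0] in H0.
set G1 := [fset p in alpha | p.1 == 1] in H1.
have in0 : forall x, x \in alpha -> x.1 = 0 -> x \in G0 by move=> x h e; rewrite !inE h e eqxx.
have in1 : forall x, x \in alpha -> x.1 = 1 -> x \in G1 by move=> x h e; rewrite !inE h e eqxx.
have l0 : forall y, y \in G0 -> y.1 = 0 by move=> y; rewrite !inE => /andP [_ /eqP].
have l1 : forall y, y \in G1 -> y.1 = 1 by move=> y; rewrite !inE => /andP [_ /eqP].
rewrite /aff_indep.
case/orP: (L p Hp) => /eqP ep; case/orP: (L q Hq) => /eqP eq; case/orP: (L r Hr) => /eqP er.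
- by rewrite det3_lvl ?ep ?eq ?er ?eqxx.
- by move=> _; exists G0 => //; apply: Or31; split; [exact: in0|exact: in0|exact: ld0].
- by move=> _; exists G0 => //; apply: Or32; split; [exact: in0|exact: in0|exact: ld0].
- by move=> _; exists G1 => //; apply: Or33; split; [exact: in1|exact: in1|exact: ld1].
- by move=> _; exists G0 => //; apply: Or33; split; [exact: in0|exact: in0|exact: ld0].
- by move=> _; exists G1 => //; apply: Or32; split; [exact: in1|exact: in1|exact: ld1].
- by move=> _; exists G1 => //; apply: Or31; split; [exact: in1|exact: in1|exact: ld1].
- by rewrite det3_lvl ?ep ?eq ?er ?eqxx.
Qed.

Definition TriOK (M : {fset {fset pt}}) p q r := exists2 G, G \in M &
  [\/ [/\ p \in G, q \in G & lattice_dist G r 1],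
      [/\ p \in G, r \in G & lattice_dist G q 1] |
      [/\ q \in G, r \in G & lattice_dist G p 1]].

Lemma sw12 M p q r : TriOK M p q r -> TriOK M q p r.
Proof. by move=> [G HG [[? ? ?]|[? ? ?]|[? ? ?]]]; exists G => //; [apply: Or31|apply: Or33|apply: Or32]. Qed.
Lemma sw23 M p q r : TriOK M p q r -> TriOK M p r q.
Proof. by move=> [G HG [[? ? ?]|[? ? ?]|[? ? ?]]]; exists G => //; [apply: Or32|apply: Or31|apply: Or33]. Qed.

Arguments sw12 {M p q r}. Arguments sw23 {M p q r}.
Lemma FB_B alpha M : flat_border_marked alpha M -> marked_B_polygon alpha M.
Proof.
move=> [a [ha -> M1 M2 M3]].
have T1 : TriOK M (0,0) (a,0) (0,1).
  exists [fset (0,0); (a,0)] => //; apply: Or31; split; rewrite ?inE ?eqxx ?orbT //.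
  exists 0, 1, 0; split;
    [done | by move=> y; rewrite !inE => /orP [] /eqP ->; rewrite /affz /=; ring | done].
have T2 : TriOK M (0,0) (a,0) (1,1).
  exists [fset (0,0); (a,0)] => //; apply: Or31; split; rewrite ?inE ?eqxx ?orbT //.
  exists 0, 1, 0; split;
    [done | by move=> y; rewrite !inE => /orP [] /eqP ->; rewrite /affz /=; ring | done].
have T3 : TriOK M (0,1) (0,0) (1,1).
  exists [fset (0,1); (0,0)] => //; apply: Or31; split; rewrite ?inE ?eqxx ?orbT //.
  exists 1, 0, 0; split;
    [done | by move=> y; rewrite !inE => /orP [] /eqP ->; rewrite /affz /=; ring | done].
have T4 : TriOK M (a,0) (1,1) (0,1).
  exists [fset (a,0); (1,1)] => //; apply: Or31; split; rewrite ?inE ?eqxx ?orbT //.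
  exists 1, (a - 1), (- a); split.
  - by rewrite /gcdz gcd1n.
  - by move=> y; rewrite !inE => /orP [] /eqP ->; rewrite /affz /=; ring.
  - have -> : affz 1 (a - 1) (- a) (0, 1) = -1 by rewrite /affz /=; ring.
    by rewrite normrN.
move=> p q r; rewrite !inE.
move=> /orP [/orP [/orP [] |] |] /eqP -> /orP [/orP [/orP [] |] |] /eqP ->
        /orP [/orP [/orP [] |] |] /eqP ->; rewrite /aff_indep;
  first [ by rewrite det3_pp eqxx | by rewrite det3_pq eqxx | by rewrite det3_qq eqxx
        | move=> _; first [ exact: T1 | exact: sw12 T1 | exact: sw23 T1 | exact: sw12 (sw23 T1)
                          | exact: sw23 (sw12 T1) | exact: sw12 (sw23 (sw12 T1))
                          | exact: T2 | exact: sw12 T2 | exact: sw23 T2 | exact: sw12 (sw23 T2)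
                          | exact: sw23 (sw12 T2) | exact: sw12 (sw23 (sw12 T2))
                          | exact: T3 | exact: sw12 T3 | exact: sw23 T3 | exact: sw12 (sw23 T3)
                          | exact: sw23 (sw12 T3) | exact: sw12 (sw23 (sw12 T3))
                          | exact: T4 | exact: sw12 T4 | exact: sw23 T4 | exact: sw12 (sw23 T4)
                          | exact: sw23 (sw12 T4) | exact: sw12 (sw23 (sw12 T4)) ] ].
Qed.

Lemma B_fwd a b c d e f alpha M : unimodular a b c d ->
  marked_B_polygon alpha M ->
  marked_B_polygon (img_set (aff_map a b c d e f) alpha) (img_marks (aff_map a b c d e f) M).
Proof.
move=> U HB.
have [a' [b' [c' [d' [e' [f' [U' K]]]]]]] := @aff_inv a b c d e f U.
apply: (@B_back a' b' c' d' e' f') => //.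
by rewrite img_set_comp img_marks_comp (img_set_id _ _ K) (img_marks_id _ _ K).
Qed.

Lemma side_fwd a b c d e f A G : unimodular a b c d ->
  is_side A G -> is_side (img_set (aff_map a b c d e f) A) (img_set (aff_map a b c d e f) G).
Proof.
move=> U HS.
have [a' [b' [c' [d' [e' [f' [U' K]]]]]]] := @aff_inv a b c d e f U.
apply: (@side_back a' b' c' d' e' f') => //.
by rewrite !img_set_comp !(img_set_id _ _ K).
Qed.

Lemma concl_comp a b c d e f alpha M : unimodular a b c d ->
  concl (img_set (aff_map a b c d e f) alpha) (img_marks (aff_map a b c d e f) M) ->
  concl alpha M.
Proof.
move=> U1 [a2 [b2 [c2 [d2 [e2 [f2 [U2 H]]]]]]].
exists (a2*a+b2*c), (a2*b+b2*d), (c2*a+d2*c), (c2*b+d2*d), (a2*e+b2*f+e2), (c2*e+d2*f+f2).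
split; first exact: unimod_comp.
move: H => /=.
rewrite img_set_comp img_marks_comp.
have E : forall x, aff_map a2 b2 c2 d2 e2 f2 (aff_map a b c d e f x) =
  aff_map (a2*a+b2*c) (a2*b+b2*d) (c2*a+d2*c) (c2*b+d2*d) (a2*e+b2*f+e2) (c2*e+d2*f+f2) x.
  by move=> x; rewrite aff_comp.
have -> : img_set (fun x => aff_map a2 b2 c2 d2 e2 f2 (aff_map a b c d e f x)) alpha =
  img_set (aff_map (a2*a+b2*c) (a2*b+b2*d) (c2*a+d2*c) (c2*b+d2*d) (a2*e+b2*f+e2) (c2*e+d2*f+f2)) alpha.
  exact: img_set_ext.
have -> : img_marks (fun x => aff_map a2 b2 c2 d2 e2 f2 (aff_map a b c d e f x)) M =
  img_marks (aff_map (a2*a+b2*c) (a2*b+b2*d) (c2*a+d2*c) (c2*b+d2*d) (a2*e+b2*f+e2) (c2*e+d2*f+f2)) M.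
  apply/fsetP => H; apply/img_marksP/img_marksP => [[G HG ->]|[G HG ->]]; exists G => //;
    exact: img_set_ext.
by [].
Qed.

Lemma sgn_aux (a d Ds Dw gs gw : int) : a != 0 -> a * Ds = d * gs -> a * Dw = d * gw ->
  0 <= gs -> 0 <= gw -> 0 <= Ds * Dw.
Proof.
move=> nz e1 e2 h1 h2.
have E : (a * a) * (Ds * Dw) = (d * d) * (gs * gw).
  by transitivity ((a * Ds) * (a * Dw)); [ring | rewrite e1 e2; ring].
have pa : 0 < a * a by clear -nz; nia.
have : 0 <= (a * a) * (Ds * Dw).
  rewrite E; apply: mulr_ge0; [clear; nia | exact: mulr_ge0].
by rewrite pmulr_rge0.
Qed.

Lemma lvl_aux (x : int) : 0 <= x -> `|x| <= 1 -> x = 0 \/ x = 1.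
Proof. move=> *; lia. Qed.

Lemma eps_aux (x : int) : `|x| = 1 -> x * x = 1.
Proof. move=> h; have : x = 1 \/ x = -1 by lia. by case=> ->. Qed.

Arguments det_line {a b c} s {u v}.
Arguments sgn_aux {a d Ds Dw gs gw}.
Lemma abs1 (x : int) : `|x| = 1 -> x = 1 \/ x = -1.
Proof. move=> *; lia. Qed.

Lemma core alpha M G u v w :
  (forall G, G \in M -> is_side alpha G) -> marked_B_polygon alpha M ->
  G \in M -> u \in G -> v \in G -> w \in alpha -> det3 w u v != 0 ->
  lattice_dist G w 1 ->
  (forall s, s \in alpha -> `|det3 s u v| <= `|det3 w u v|) -> concl alpha M.
Proof.
move=> HS HB HG Hu Hv Hw Dnz [a' [b' [c' [g van ab]]]] Hmax.
have [a [b [c [nz nn eqG card]]]] := HS G HG.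
have Gsub : forall x, x \in G -> x \in alpha /\ affz a b c x = 0.
  by move=> x; rewrite eqG !inE => /andP [h /eqP].
have [Au gu] := Gsub u Hu; have [Av gv] := Gsub v Hv.
have [u0 [v0 bez]] := Bezoutz a' b'; rewrite g in bez.
pose K := v0 * (v.1 - u.1) - u0 * (v.2 - u.2).
have hf : forall s, det3 s u v = K * affz a' b' c' s.
  move=> s; have [h1 h2] := det_line s (van u Hu) (van v Hv).
  have : det3 s u v = u0 * (a' * det3 s u v) + v0 * (b' * det3 s u v).
    by rewrite !mulrA -mulrDl bez mul1r.
  by rewrite h1 h2 /K => ->; ring.
pose eps := affz a' b' c' w.
have e2 : eps * eps = 1 by apply: eps_aux.
have Knz : K != 0 by move: Dnz; rewrite hf; apply: contraNneq => ->; rewrite mul0r.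
have bound : forall s, s \in alpha -> `|affz a' b' c' s| <= 1.
  move=> s Hs; have := Hmax s Hs; rewrite !hf !normrM ab mulr1.
  have pK : 0 < `|K| by rewrite normr_gt0.
  by rewrite -{2}(mulr1 `|K|) ler_pM2l.
have sign : forall s, s \in alpha -> 0 <= eps * affz a' b' c' s.
  move=> s Hs.
  have [g1 g2] := det_line s gu gv; have [g3 g4] := det_line w gu gv.
  have DD : 0 <= det3 s u v * det3 w u v.
    case/orP: nz => nz.
      exact: (sgn_aux nz g1 g3 (nn s Hs) (nn w Hw)).
    exact: (sgn_aux nz g2 g4 (nn s Hs) (nn w Hw)).
  move: DD; rewrite !hf.
  have -> : K * affz a' b' c' s * (K * affz a' b' c' w) = (K * K) * (eps * affz a' b' c' s).
    by rewrite /eps; ring.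
  have pK : 0 < K * K by clear -Knz; nia.
  by rewrite pmulr_rge0.
have lv : forall s, s \in alpha -> eps * affz a' b' c' s = 0 \/ eps * affz a' b' c' s = 1.
  move=> s Hs; apply: lvl_aux; first exact: sign.
  by rewrite normrM ab mul1r; apply: bound.
have uv : v != u.
  apply/eqP => e; move: Dnz; rewrite e det3_qq eqxx //.
have zeroG : forall s, s \in alpha -> (eps * affz a' b' c' s == 0) = (s \in G).
  move=> s Hs; apply/idP/idP.
  - move=> /eqP h0.
    have f0 : affz a' b' c' s = 0.
      by have := congr1 (fun x => eps * x) h0; rewrite mulrA e2 mul1r mulr0.
    have D0 : det3 s u v = 0 by rewrite hf f0 mulr0.
    have [g1 g2] := det_line s gu gv; rewrite D0 !mulr0 in g1 g2.
    have gs : affz a b c s = 0.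
      case: (boolP (v.2 - u.2 == 0)) => h2.
        have h1 : v.1 - u.1 != 0.
          apply/eqP => h1; move/eqP: uv; apply; apply: pt_eq; lra.
        by apply: (mulfI h1); rewrite -g2 mulr0.
      by apply: (mulfI h2); apply: oppr_inj; rewrite mulr0 oppr0 -mulNr -g1.
    by rewrite eqG !inE Hs gs eqxx.
  - by move=> hs; rewrite (van s hs) mulr0.
pose T1 := aff_map (eps * a') (eps * b') (- v0) u0 (eps * c') 0.
have U1 : unimodular (eps * a') (eps * b') (- v0) u0.
  rewrite /unimodular.
  have -> : eps * a' * u0 - eps * b' * - v0 = eps by rewrite -[RHS]mulr1 -bez; ring.
  exact: abs1.
have T1E : forall s, (T1 s).1 = eps * affz a' b' c' s.
  by move=> s; rewrite /T1 /aff_map /affz /=; ring.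
have inj := @aff_inj _ _ _ _ (eps * c') 0 U1.
apply: (@concl_comp _ _ _ _ (eps * c') 0 _ _ U1).
apply: (@normalized (img_set T1 alpha) (img_marks T1 M) _ _ (T1 u) (T1 v) (T1 w)).
- move=> y /img_setP [s Hs ->]; rewrite T1E; exact: lv.
- have -> : [fset y in img_set T1 alpha | y.1 == 0] = img_set T1 G.
    apply/fsetP => y; rewrite !inE; apply/andP/img_setP.
    + move=> [/img_setP [s Hs ->]]; rewrite T1E zeroG // => hs; by exists s.
    + move=> [s hs ->]; have [As _] := Gsub s hs.
      by split; [apply: img_set_in | rewrite T1E zeroG].
  exact: img_marks_in.
- exact: img_set_in.
- exact: img_set_in.
- by rewrite T1E; apply/eqP; rewrite zeroG.
- by rewrite T1E; apply/eqP; rewrite zeroG.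
- by rewrite (inj_eq inj) eq_sym.
- exact: img_set_in.
- by rewrite T1E /eps; rewrite -/eps e2.
- exact: B_fwd.
- move=> H /img_marksP [G' HG' ->]; apply: side_fwd => //; exact: HS.
Qed.

Lemma max_tri (alpha : {fset pt}) p0 q0 r0 : p0 \in alpha -> q0 \in alpha -> r0 \in alpha ->
  exists p q r, [/\ p \in alpha, q \in alpha, r \in alpha &
    forall x y z, x \in alpha -> y \in alpha -> z \in alpha -> `|det3 x y z| <= `|det3 p q r|].
Proof.
move=> h0 h1 h2.
pose s := enum_fset alpha.
pose S := [seq (xy, z) | xy <- [seq (x, y) | x <- s, y <- s], z <- s].
have memS : forall x y z, x \in alpha -> y \in alpha -> z \in alpha -> ((x, y), z) \in S.
  move=> x y z hx hy hz; apply/allpairsP; exists ((x, y), z); split => //.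
  by apply/allpairsP; exists (x, y).
have [[[p q] r] HS Hm] := seq_min _ (fun t : pt * pt * pt => - `|det3 t.1.1 t.1.2 t.2|) _ _ (memS _ _ _ h0 h1 h2).
have inS : forall t, t \in S -> [/\ t.1.1 \in alpha, t.1.2 \in alpha & t.2 \in alpha].
  move=> t /allpairsP [[xy z] [hxy hz E]]; rewrite E /=.
  move: hxy hz => /= /allpairsP [[x y] [hx hy E']] hz; rewrite E' /=.
  by split.
have [hp hq hr] := inS _ HS.
exists p, q, r; split => // x y z hx hy hz.
by have := Hm _ (memS _ _ _ hx hy hz); rewrite lerN2.
Qed.

Local Open Scope fset_scope.

Theorem lemma4p4 (alpha : {fset pt}) (M : {fset {fset pt}}) :
  dim2 alpha ->
  (forall G, G \in M -> is_side alpha G) ->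
  marked_B_polygon alpha M <->
  exists (a b c d e f : int), unimodular a b c d /\
    let T := aff_map a b c d e f in
    [\/ B1_marked (img_set T alpha) (img_marks T M),
        B2_marked (img_set T alpha) (img_marks T M) |
        flat_border_marked (img_set T alpha) (img_marks T M)].
Proof.
move=> [p0 [q0 [r0 [h0 h1 h2 hi]]]] HS; split.
- move=> HB.
  have [p [q [r [hp hq hr Hm]]]] := max_tri _ _ _ _ h0 h1 h2.
  have nz : det3 p q r != 0.
    have := Hm _ _ _ h0 h1 h2; rewrite -normr_gt0; apply: lt_le_trans.
    by rewrite normr_gt0.
  have [G HG [[g1 g2 gd]|[g1 g2 gd]|[g1 g2 gd]]] := HB p q r hp hq hr nz.
  + have E : det3 r p q = det3 p q r by rewrite /det3; ring.
    apply: (@core alpha M G p q r HS HB HG g1 g2 hr _ gd); first by rewrite E.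
    by move=> s hs; rewrite E; apply: Hm.
  + have E : det3 q p r = - det3 p q r by rewrite /det3; ring.
    apply: (@core alpha M G p r q HS HB HG g1 g2 hq _ gd); first by rewrite E oppr_eq0.
    by move=> s hs; rewrite E normrN; apply: Hm.
  + apply: (@core alpha M G q r p HS HB HG g1 g2 hp nz gd).
    by move=> s hs; apply: Hm.
- move=> [a [b [c [d [e [f [U H]]]]]]].
  apply: (@B_back a b c d e f) => //.
  by case: H => [/B1_B|/B2_B|/FB_B].
Qed.
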